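(* Let $(X,d)$ be a compact metric space, $f_{0,\infty}=\{f_n\}_{n=0}^\infty$ a sequence of continuous self-maps of $X$, $A=\{a_i\}_{i=1}^{\infty}\in\mathcal{S}$, $nA=\{na_i\}_{i=1}^{\infty}$, and $\sigma(a_1,a_2,\dots)=(a_2,a_3,\dots)$ the shift. Then (i) $h_{A}(f_{0,\infty}^{n})=h_{nA}(f_{0,\infty})$ for all $n\geq1$; (ii) $h_A(f_{0,\infty})=h_{\sigma^k(A)}(f_{0,\infty})$ for all $k\geq1$.
   Context: $f_i^n=f_{i+n-1}\circ\cdots\circ f_i$ ($n\ge1$), $f_i^0=\mathrm{id}$, $f_i^{-n}(B)=(f_i^n)^{-1}(B)$. The $n$-th compositions system is $f_{0,\infty}^n=\{f_{kn}^n\}_{k=0}^\infty$, i.e. the sequence of maps $f_{kn+n-1}\circ\cdots\circ f_{kn}$, $k\ge0$. $\mathcal S$ is the set of strictly increasing sequences of nonnegative integers. For a sequence of continuous self-maps $g_{0,\infty}$ and $A\in\mathcal S$, $h_A(g_{0,\infty})=\sup_{\mathscr A}\limsup_{m\to\infty}\frac1m\log\mathcal N(\bigvee_{i=1}^m g_0^{-a_i}\mathscr A)$ over finite open covers $\mathscr A$, with $\bigvee$ the common refinement and $\mathcal N$ the minimal cardinality of a subcover. *)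

(* Defs.v *)
From Stdlib Require Lists.List.
From HB Require Import structures.
From mathcomp Require Import all_boot all_order all_algebra.
From mathcomp Require Import all_classical all_reals all_analysis.
Set Implicit Arguments. Unset Strict Implicit. Unset Printing Implicit Defensive.
Import Order.TTheory GRing.Theory Num.Theory.
Local Open Scope classical_set_scope.
Local Open Scope ring_scope.

Fixpoint comp {X : Type} (f : nat -> X -> X) (i n : nat) : X -> X :=
  match n with
  | 0 => id
  | n'.+1 => f (i + n')%N \o comp f i n'
  end.

Definition nth_comp_system {X : Type} (f : nat -> X -> X) (n : nat) : nat -> X -> X :=
  fun k => comp f (k * n)%N n.

(* A in S : strictly increasing sequence of nonnegative integers, a 0 = a_1 *)
Definition strictly_incr (a : nat -> nat) : Prop := forall i, (a i < a i.+1)%N.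

Definition open_cover {X : topologicalType} (U : seq (set X)) : Prop :=
  (forall A, Stdlib.Lists.List.In A U -> open A) /\ (forall x, exists A, Stdlib.Lists.List.In A U /\ A x).

Definition join {X : Type} (Us : seq (seq (set X))) : seq (set X) :=
  foldr (fun U acc => [seq A `&` B | A <- U, B <- acc]) [:: setT] Us.

(* minimal cardinality of a subcover (0 if U does not cover) *)
Definition has_subcover_of_size {X : Type} (U : seq (set X)) (n : nat) : Prop :=
  exists s : seq (set X), size s = n /\ (forall A, Stdlib.Lists.List.In A s -> Stdlib.Lists.List.In A U) /\
    (forall x, exists A, Stdlib.Lists.List.In A s /\ A x).

Definition Ncov {X : Type} (U : seq (set X)) : nat :=
  match pselect (exists n, `[< has_subcover_of_size U n >]) with
  | left pf => ex_minn pf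
  | right _ => 0%N
  end.

(* \bigvee_{i=1}^m g_0^{-a_i} U, with a_i = a (i-1) *)
Definition join_preimages {X : Type} (g : nat -> X -> X) (a : nat -> nat)
  (U : seq (set X)) (m : nat) : seq (set X) :=
  join [seq [seq comp g 0 (a i) @^-1` B | B <- U] | i <- iota 0 m].

Definition seq_entropy {R : realType} {X : topologicalType}
  (g : nat -> X -> X) (a : nat -> nat) : \bar R :=
  ereal_sup [set limn_esup (fun m : nat =>
                 ((ln ((Ncov (join_preimages g a U m.+1))%:R : R)) / (m.+1)%:R)%:E)
            | U in [set U : seq (set X) | open_cover U]].

(* Main.v *)
Require Import Defs.
From HB Require Import structures.
From mathcomp Require Import all_boot all_order all_algebra.
From mathcomp Require Import all_classical all_reals all_analysis.
From mathcomp Require Import ring lra.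
Import Order.TTheory GRing.Theory Num.Theory.
Local Open Scope classical_set_scope.
Local Open Scope ring_scope.
Notation In := List.In.
Notation in_app_iff := List.in_app_iff.
Notation in_map_iff := List.in_map_iff.

Definition covers {T : Type} (U : seq (set T)) := forall x, exists A, In A U /\ A x.

Lemma In_allpairs {T : Type} (U V : seq (set T)) C :
  In C [seq A `&` B | A <- U, B <- V] <->
  exists A B, In A U /\ In B V /\ C = A `&` B.
Proof.
elim: U => [|a U IH] /=.
  by split => // -[A [B [[]]]].
rewrite in_app_iff in_map_iff IH; split.
  case=> [[B [<- HB]]|[A [B [HA [HB ->]]]]].
    by exists a, B; split; [left|].
  by exists A, B; split; [right|].
case=> [A [B [[<-|HA] [HB ->]]]].
  by left; exists B.
by right; exists A, B.
Qed.

Lemma join_cat {T : Type} (l1 l2 : seq (seq (set T))) C :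
  In C (join (l1 ++ l2)) <->
  exists A B, In A (join l1) /\ In B (join l2) /\ C = A `&` B.
Proof.
elim: l1 C => [|U l1 IH] C /=.
  split.
    by move=> H; exists setT, C; split; [left|split => //; rewrite setTI].
  by case=> [A [B [[<-|[]] [HB ->]]]]; rewrite setTI.
rewrite In_allpairs; split.
  case=> [A0 [D [HA0 [HD ->]]]].
  move/IH: HD => [B1 [B2 [H1 [H2 ->]]]].
  exists (A0 `&` B1), B2; split; last by split => //; rewrite setIA.
  by apply/In_allpairs; exists A0, B1.
case=> [A [B [/In_allpairs [A0 [B1 [H0 [H1 ->]]]] [HB ->]]]].
exists A0, (B1 `&` B); split => //; split; last by rewrite setIA.
by apply/IH; exists B1, B.
Qed.

Lemma join_covers {T : Type} (l : seq (seq (set T))) :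
  (forall U, In U l -> covers U) -> covers (join l).
Proof.
elim: l => [|U l IH] H x /=.
  by exists setT; split; [left|].
have [A [HA Ax]] := H U (or_introl erefl) x.
have [B [HB Bx]] := IH (fun V HV => H V (or_intror HV)) x.
exists (A `&` B); split; last by split.
by apply/In_allpairs; exists A, B.
Qed.

Lemma Ncov_spec {T : Type} (U : seq (set T)) : covers U ->
  (exists s, size s = Ncov U /\ (forall A, In A s -> In A U) /\ covers s) /\
  (forall n, has_subcover_of_size U n -> (Ncov U <= n)%N).
Proof.
move=> cU; rewrite /Ncov; case: pselect => [pf|nf]; last first.
  exfalso; apply: nf; exists (size U); apply/asboolP; exists U; split => //.
case: ex_minnP => n /asboolP Hn Hmin; split.
  by case: Hn => s [? [? ?]]; exists s.
by move=> m Hm; apply: Hmin; apply/asboolP.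
Qed.

Arguments Ncov_spec {T U}.

Lemma Ncov_le_size {T : Type} (U : seq (set T)) : covers U -> (Ncov U <= size U)%N.
Proof. move=> cU; apply: ((Ncov_spec cU).2 (size U)); by exists U. Qed.

Lemma Ncov_join_cat {T : Type} (l1 l2 : seq (seq (set T))) :
  covers (join l1) -> covers (join l2) ->
  (Ncov (join (l1 ++ l2)) <= size (join l1) * Ncov (join l2))%N.
Proof.
move=> c1 c2; have [[s [ss [sU cs]]] _] := Ncov_spec c2.
have c12 : covers (join (l1 ++ l2)).
  move=> x; have [A [HA Ax]] := c1 x; have [B [HB Bx]] := c2 x.
  by exists (A `&` B); split; [apply/join_cat; exists A, B|].
rewrite -ss -(size_allpairs setI); apply: (Ncov_spec c12).2.
eexists; split; first reflexivity; split.
  move=> C /In_allpairs [A [B [HA [HB ->]]]].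
  by apply/join_cat; exists A, B; split => //; split => //; apply: sU.
move=> x; have [A [HA Ax]] := c1 x; have [B [HB Bx]] := cs x.
by exists (A `&` B); split; [apply/In_allpairs; exists A, B|].
Qed.

Lemma lift_cover {T : Type} (V s : seq (set T)) :
  (forall C, In C s -> exists B, In B V /\ C `<=` B) ->
  exists s', size s' = size s /\ (forall B, In B s' -> In B V) /\
    (forall C x, In C s -> C x -> exists B, In B s' /\ B x).
Proof.
elim: s => [|C s IH] H.
  by exists [::]; split => //; split => // C x [].
have [B [HB CB]] := H C (or_introl erefl).
have [s' [ss [sV sc]]] := IH (fun D HD => H D (or_intror HD)).
exists (B :: s'); split; first by rewrite /= ss.
split; first by move=> B' [<-|]; [|apply: sV].
move=> D x [<- Dx|HD Dx]; first by exists B; split; [left|apply: CB].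
by have [B' [? ?]] := sc D x HD Dx; exists B'; split; [right|].
Qed.

Arguments lift_cover {T V s}.

Lemma Ncov_refine {T : Type} (V W : seq (set T)) : covers W ->
  (forall C, In C W -> exists B, In B V /\ C `<=` B) -> (Ncov V <= Ncov W)%N.
Proof.
move=> cW HWV; have [[s [ss [sW cs]]] _] := Ncov_spec cW.
have [s' [ss' [s'V s'c]]] := lift_cover (fun C HC => HWV C (sW C HC)).
have cV : covers V.
  move=> x; have [C [HC Cx]] := cs x; have [B [HB Bx]] := s'c C x HC Cx.
  by exists B; split => //; apply: s'V.
rewrite -ss -ss'; apply: (Ncov_spec cV).2; exists s'; split => //; split => //.
move=> x; have [C [HC Cx]] := cs x; exact: s'c C x HC Cx.
Qed.

Lemma size_join_le {T : Type} (l : seq (seq (set T))) D :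
  (forall U, In U l -> (size U <= D)%N) -> (size (join l) <= D ^ size l)%N.
Proof.
elim: l => [|U l IH] H /=; first by rewrite expn0.
rewrite size_allpairs expnS leq_mul //; first exact: H (or_introl erefl).
exact: IH (fun V HV => H V (or_intror HV)).
Qed.


Lemma compD {T : Type} (f : nat -> T -> T) (i p q : nat) x :
  Defs.comp f i (p + q)%N x = Defs.comp f (i + p)%N q (Defs.comp f i p x).
Proof.
elim: q => [|q IH] /=; first by rewrite addn0.
by rewrite addnS /= IH addnA.
Qed.

Lemma comp_nth {T : Type} (f : nat -> T -> T) (n m : nat) x :
  Defs.comp (nth_comp_system f n) 0 m x = Defs.comp f 0 (m * n)%N x.
Proof.
elim: m => [|m IH] //=.
by rewrite /nth_comp_system IH mulSnr compD.
Qed.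

Lemma limsup_cmp (R : realType) (v w : nat -> R) :
  (forall eps : R, 0 < eps -> exists N, forall m, (N <= m)%N ->
      exists j, (m <= j + N)%N /\ v m <= w j + eps) ->
  (limn_esup (fun m => (v m)%:E) <= limn_esup (fun m => (w m)%:E))%E.
Proof.
move=> H; rewrite /limn_esup /limf_esup.
apply: le_ereal_inf_tmp => _ [A [n0 _ HA] <-].
apply/lee_addgt0Pr => e e0.
have [N HN] := H e e0.
apply: (le_trans (ereal_inf_lbound _)).
  exists [set m | (n0 + N <= m)%N]; first by exists (n0 + N)%N.
  reflexivity.
apply: ge_ereal_sup => _ [m /= hm <-].
have [j [hj hv]] := HN m (leq_trans (leq_addl _ _) hm).
apply: (le_trans (y := ((w j)%:E + e%:E)%E)); first by rewrite -EFinD lee_fin.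
rewrite leeD2r //; apply: ereal_sup_ubound; exists j => //.
apply: HA => /=; rewrite -(leq_add2r N); exact: leq_trans hm hj.
Qed.


Section R.
Context {R : realType}.

Lemma ln_nat_ge0 (n : nat) : 0 <= ln (n%:R : R).
Proof.
case: n => [|n]; first by rewrite ln0.
by apply: ln_ge0; rewrite ler1n.
Qed.

Lemma ln_nat_le (a b : nat) : (a <= b)%N -> ln (a%:R : R) <= ln b%:R.
Proof.
case: a => [|a] h; first by rewrite ln0 // ln_nat_ge0.
rewrite ler_ln ?ler_nat // qualifE /= ltr0n //; exact: leq_trans h.
Qed.

Lemma ln_natX (D k : nat) : (1 <= D)%N -> ln ((D ^ k)%:R : R) = k%:R * ln D%:R.
Proof.
move=> hD; rewrite natrX lnXn ?ltr0n // mulr_natl //.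
Qed.

Lemma ln_nat_mul_le (D k P : nat) : (1 <= D)%N ->
  ln (((D ^ k) * P)%:R : R) <= k%:R * ln D%:R + ln P%:R.
Proof.
move=> hD; case: P => [|P].
  rewrite muln0 ln0 // addr0; apply: mulr_ge0 => //; exact: ln_nat_ge0.
rewrite natrM lnM ?ln_natX // ?qualifE /= ?ltr0n // ?expn_gt0 ?hD.
by [].
Qed.


Lemma ineq1 (p q L : R) (M k : nat) : (0 < M)%N -> 0 <= L -> p <= q ->
  q <= (M + k)%:R * L -> p / M%:R <= q / (M + k)%:R + k%:R * L / M%:R.
Proof.
move=> M0 L0 pq qL.
have hM : (0 : R) < M%:R by rewrite ltr0n.
have hj : (0 : R) < (M + k)%:R by rewrite ltr0n addn_gt0 M0.
have k0 : (0 : R) <= k%:R by [].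
rewrite natrD in hj qL *.
set m := M%:R in hM qL hj *; set kk := k%:R in k0 qL hj *.
rewrite -subr_ge0.
have -> : q / (m + kk) + kk * L / m - p / m = (q * m + kk * L * (m + kk) - p * (m + kk)) / (m * (m + kk)).
  by field; apply/andP; split; rewrite gt_eqF.
apply: divr_ge0; last by apply: mulr_ge0; apply: ltW.
have h1 : 0 <= (q - p) * (m + kk) by apply: mulr_ge0; [rewrite subr_ge0|apply: ltW].
have h2 : 0 <= kk * ((m + kk) * L - q) by apply: mulr_ge0; rewrite // subr_ge0.
nra.
Qed.

Lemma ineq2 (p q c : R) (M k : nat) : (0 < M)%N -> 0 <= p -> 0 <= c ->
  q <= c + p -> q / (M + k)%:R <= p / M%:R + c / M%:R.
Proof.
move=> M0 p0 c0 qcp.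
have hM : (0 : R) < M%:R by rewrite ltr0n.
have hj : (0 : R) < (M + k)%:R by rewrite ltr0n addn_gt0 M0.
have k0 : (0 : R) <= k%:R by [].
rewrite natrD in hj *.
set m := M%:R in hM hj *; set kk := k%:R in k0 hj *.
rewrite -subr_ge0.
have -> : p / m + c / m - q / (m + kk) = ((p + c) * (m + kk) - q * m) / (m * (m + kk)).
  by field; apply/andP; split; rewrite gt_eqF.
apply: divr_ge0; last by apply: mulr_ge0; apply: ltW.
have h1 : 0 <= (p + c) * kk by apply: mulr_ge0 => //; lra.
have h2 : 0 <= (c + p - q) * m by apply: mulr_ge0; [rewrite subr_ge0|apply: ltW].
nra.
Qed.

Lemma small (c eps : R) (N m : nat) : 0 < eps -> c / eps < N%:R -> (N <= m)%N ->
  c / m.+1%:R <= eps.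
Proof.
move=> e0 hN hm.
have hM : (0 : R) < m.+1%:R by rewrite ltr0n.
rewrite ler_pdivrMr //; apply: ltW.
rewrite ltr_pdivrMr // in hN.
apply: (lt_le_trans hN); rewrite mulrC ler_wpM2l ?ltW //.
by rewrite ltr_nat ltnS.
Qed.

End R.


Lemma jp_split {T : Type} (f : nat -> T -> T) (a : nat -> nat) U (k m : nat) :
  join_preimages f a U (k + m)%N =
  join ([seq [seq Defs.comp f 0 (a i) @^-1` B | B <- U] | i <- iota 0 k] ++
        [seq [seq Defs.comp f 0 (a (i + k)%N) @^-1` B | B <- U] | i <- iota 0 m]).
Proof.
rewrite /join_preimages iotaD map_cat add0n; congr (join (_ ++ _)).
rewrite -[k in iota k]addn0 iotaDl -map_comp; apply: eq_map => i /=.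
by rewrite addnC.
Qed.

Lemma shift_U (R : realType) (T : Type) (f : nat -> T -> T) (a : nat -> nat)
  (k : nat) (U : seq (set T)) : covers U ->
  limn_esup (fun m : nat =>
     ((ln ((Ncov (join_preimages f a U m.+1))%:R : R)) / (m.+1)%:R)%:E) =
  limn_esup (fun m : nat =>
     ((ln ((Ncov (join_preimages f (fun i => a (i + k)%N) U m.+1))%:R : R)) / (m.+1)%:R)%:E).
Proof.
move=> cU.
set D := maxn (size U) 1.
have D1 : (1 <= D)%N by apply: leq_maxr.
have covW : forall (b : nat -> nat) s V,
    List.In V [seq [seq Defs.comp f 0 (b i) @^-1` B | B <- U] | i <- s] -> covers V.
  move=> b s V /List.in_map_iff [i [<- _]] x.
  have [A [HA Ax]] := cU (Defs.comp f 0 (b i) x).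
  by exists (Defs.comp f 0 (b i) @^-1` A); split => //; apply/List.in_map_iff; exists A.
have sizeW : forall (b : nat -> nat) s V,
    List.In V [seq [seq Defs.comp f 0 (b i) @^-1` B | B <- U] | i <- s] -> (size V <= D)%N.
  by move=> b s V /List.in_map_iff [i [<- _]]; rewrite size_map leq_maxl.
have covcat : forall m V, List.In V
    ([seq [seq Defs.comp f 0 (a i) @^-1` B | B <- U] | i <- iota 0 k] ++
     [seq [seq Defs.comp f 0 (a (i + k)%N) @^-1` B | B <- U] | i <- iota 0 m]) -> covers V.
  by move=> m V /List.in_app_iff [] /covW.
have hPQ : forall m, (Ncov (join_preimages f (fun i => a (i + k)%N) U m) <=
                      Ncov (join_preimages f a U (m + k)))%N.
  move=> m; rewrite addnC jp_split; apply: Ncov_refine.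
    exact: join_covers _ (covcat m).
  by move=> C /join_cat [A [B [_ [HB ->]]]]; exists B; split => //; apply: subIsetr.
have hQP : forall m, (Ncov (join_preimages f a U (m + k)) <=
                  D ^ k * Ncov (join_preimages f (fun i => a (i + k)%N) U m))%N.
  move=> m; rewrite addnC jp_split.
  apply: leq_trans (Ncov_join_cat _ _ _ _) _.
  - by apply: join_covers => V /covW.
  - by apply: join_covers => V /covW.
  rewrite leq_mul2r; apply/orP; right.
  have := size_join_le [seq [seq Defs.comp f 0 (a i) @^-1` B | B <- U] | i <- iota 0 k] D.
  by rewrite size_map size_iota; apply => V /sizeW.
have hQ : forall j, (Ncov (join_preimages f a U j) <= D ^ j)%N.
  move=> j; apply: leq_trans (Ncov_le_size _ _) _; first by apply: join_covers => V /covW.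
  have := size_join_le [seq [seq Defs.comp f 0 (a i) @^-1` B | B <- U] | i <- iota 0 j] D.
  by rewrite size_map size_iota; apply => V /sizeW.
set c : R := k%:R * ln D%:R.
have c0 : 0 <= c by apply: mulr_ge0 => //; exact: ln_nat_ge0.
apply/le_anti/andP; split; apply: limsup_cmp => eps e0;
  have hN := archi_boundP (divr_ge0 c0 (ltW e0)).
- exists (Num.bound (c / eps) + k)%N => m' hm'.
  exists (m' - k)%N; split; first by rewrite addnCA subnK ?leq_addl // (leq_trans (leq_addl _ _) hm').
  set m := (m' - k)%N.
  have hm : m' = (m + k)%N by rewrite subnK // (leq_trans (leq_addl _ _) hm').
  rewrite hm -addSn.
  apply: le_trans (ineq2 (ln (Ncov (join_preimages f (fun i => a (i + k)%N) U m.+1))%:R) _ c m.+1 k _ _ _ _) _ => //.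
  + exact: ln_nat_ge0.
  + have h1 := @ln_nat_le R _ _ (hQP m.+1).
    apply: (le_trans h1); rewrite /c; exact: ln_nat_mul_le.
  + rewrite lerD2l; apply: small hN _ => //.
    by rewrite -(leq_add2r k) -hm.
- exists (Num.bound (c / eps)) => m hm.
  exists (m + k)%N; split; first by rewrite -addnA leq_addr.
  rewrite -addSn.
  apply: le_trans (ineq1 (ln (Ncov (join_preimages f (fun i => a (i + k)%N) U m.+1))%:R) (ln (Ncov (join_preimages f a U (m.+1 + k)))%:R) (ln D%:R) m.+1 k _ _ _ _) _ => //.
  + exact: ln_nat_ge0.
  + exact: ln_nat_le (hPQ m.+1).
  + by rewrite -ln_natX //; apply: ln_nat_le.
  + rewrite lerD2l; exact: small hN hm.
Qed.


Lemma jp_nth {T : Type} (f : nat -> T -> T) (n : nat) (a : nat -> nat) U m :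
  join_preimages (nth_comp_system f n) a U m =
  join_preimages f (fun i => (n * a i)%N) U m.
Proof.
rewrite /join_preimages; congr join; apply: eq_map => i.
have -> : Defs.comp (nth_comp_system f n) 0 (a i) = Defs.comp f 0 (n * a i)%N.
  by apply: funext => x; rewrite comp_nth mulnC.
by [].
Qed.

Theorem lemma4p1 (R : realType) (X : metricType R)
  (f : nat -> X -> X) (a : nat -> nat) :
  compact [set: X] ->
  (forall n, continuous (f n)) ->
  strictly_incr a ->
  (forall n : nat, (1 <= n)%N ->
     seq_entropy (R := R) (nth_comp_system f n) a =
     seq_entropy (R := R) f (fun i => (n * a i)%N)) /\
  (forall k : nat, (1 <= k)%N ->
     seq_entropy (R := R) f a = seq_entropy (R := R) f (fun i => a (i + k)%N)).
Proof.
move=> _ _ _; split.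
  move=> n _; rewrite /seq_entropy; congr ereal_sup; apply: eq_imagel => U _.
  by congr limn_esup; apply: funext => m; rewrite jp_nth.
move=> k _; rewrite /seq_entropy; congr ereal_sup; apply: eq_imagel => U [_ cU].
exact: shift_U.
Qed.
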